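(* Let $m,p,n$ be positive integers with $p\mid m$ and $n>1$, and let $\boldsymbol\theta=(\theta_1,\dots,\theta_n)$ be the basic polynomial map of $G(m,p,n)$ described in the context. Consider the map $\pi:\mathbb C^n\to\mathbb C^{n-1}$, $\pi(z_1,\ldots,z_n)=(\gamma_1z_1,\ldots,\gamma_{n-1}z_{n-1})$ with $\gamma_i=\frac{n-i}{n}$, $i=1,\ldots,n-1$. Then $\pi(\overline{\boldsymbol\Theta}_n)\subseteq\Gamma_{n-1}$.
   Context: Put $q=m/p$. $G(m,p,n)$ is the group of $n\times n$ monomial matrices whose nonzero entries are $m$-th roots of unity and whose product of nonzero entries is an $(m/p)$-th root of unity. Let $s_i$ denote the $i$-th elementary symmetric polynomial. For $1\le i\le n-1$, $\theta_i(z)=s_i(z_1^m,\ldots,z_n^m)$, and $\theta_n(z)=(z_1\cdots z_n)^q$. Put $\boldsymbol\Theta_n=\boldsymbol\theta(\mathbb D^n)$, so that $\overline{\boldsymbol\Theta}_n=\boldsymbol\theta(\overline{\mathbb D}^n)$. For $k\ge1$, $\Gamma_k=\boldsymbol s(\overline{\mathbb D}^k)$ is the closed symmetrized polydisc, where $\boldsymbol s=(s_1,\dots,s_k)$ on $\mathbb C^k$. *)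

(* Defs.v *)
From mathcomp Require Import all_boot all_order all_algebra.
From mathcomp Require Import reals complex.
Set Implicit Arguments. Unset Strict Implicit. Unset Printing Implicit Defensive.
Import Order.TTheory GRing.Theory Num.Theory.
Local Open Scope ring_scope.

Section Defs.
Variable R : realType.
Local Notation C := R[i].

Definition esym (k : nat) (x : 'I_k -> C) (i : nat) : C :=
  \sum_(I : {set 'I_k} | #|I| == i) \prod_(j in I) x j.

Definition in_cpolydisc (k : nat) (x : 'I_k -> C) : Prop :=
  forall j, `|x j| <= 1.

Definition Gamma (k : nat) (y : 'I_k -> C) : Prop :=
  exists x : 'I_k -> C, in_cpolydisc x /\ forall i : 'I_k, y i = esym x i.+1.

(* basic polynomial map theta of G(m,p,n); component i : 'I_n is theta_{i+1} *)
Definition theta (m p n : nat) (z : 'I_n -> C) (i : 'I_n) : C :=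
  if (i.+1 < n)%N then esym (fun j => z j ^+ m) i.+1
  else (\prod_(j < n) z j) ^+ (m %/ p).

Definition Thetabar (m p n : nat) (y : 'I_n -> C) : Prop :=
  exists z : 'I_n -> C, in_cpolydisc z /\ forall i, y i = theta m p z i.

Definition piproj (n : nat) (y : 'I_n -> C) (i : 'I_n.-1) : C :=
  ((n - i.+1)%:R / n%:R) * y (widen_ord (leq_pred n) i).
End Defs.

(* Main.v *)
Require Import Defs.
From mathcomp Require Import all_boot all_order all_algebra.
From mathcomp Require Import reals complex.
From mathcomp Require Import zify.
Import Order.TTheory GRing.Theory Num.Theory.
Local Open Scope ring_scope.

Section S.
Variable R : realType.
Local Notation C := R[i].

Lemma coef_prodXsubC k (a : 'I_k -> C) i : (i <= k)%N ->
  (\prod_(j < k) ('X - (a j)%:P))`_(k - i) = (-1) ^+ i * Defs.esym a i.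
Proof.
move=> hik.
have -> : \prod_(j < k) ('X - (a j)%:P) =
  \prod_(j < k) \sum_(b : bool) (if b then (- a j)%:P else 'X).
  by apply: eq_bigr => j _; rewrite big_bool /= addrC polyCN.
rewrite bigA_distr_bigA coef_sum.
have E : forall f : {ffun 'I_k -> bool},
  \prod_(j < k) (if f j then (- a j)%:P else 'X) =
  (\prod_(j in [pred j | f j]) (- a j))%:P * 'X^(k - #|[pred j | f j]|).
  move=> f; rewrite (bigID [pred j | f j]) /=.
  rewrite rmorph_prod /=; congr (_ * _).
    by apply: eq_bigr => j ->.
  rewrite (eq_bigr (fun _ => 'X)); last by move=> j /negbTE ->.
  rewrite prodr_const; congr (_ ^+ _).
  have := cardC [pred j | f j]; rewrite card_ord => hc.
  have -> : #|(fun j => ~~ f j)| = #|[predC [pred j | f j]]| by apply: eq_card.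
  move: hc; move: #|[predC _]| #|[pred j | f j]| => u v; lia.
under eq_bigr => f _ do rewrite E coefCM coefXn.
rewrite /Defs.esym mulr_sumr.
rewrite (reindex (fun A : {set 'I_k} => [ffun j => j \in A])) /=; last first.
  exists (fun f : {ffun 'I_k -> bool} => [set j | f j]) => A _.
    by apply/setP => j; rewrite inE ffunE.
  by apply/ffunP => j; rewrite ffunE inE.
rewrite [RHS]big_mkcond /=; apply: eq_bigr => A _.
have -> : #|[pred j | [ffun j => j \in A] j]| = #|A|.
  by apply: eq_card => j; rewrite !inE ffunE.
have cA : (#|A| <= k)%N by have := max_card A; rewrite card_ord.
have -> : (k - i == k - #|A|)%N = (#|A| == i).
  apply/eqP/eqP => [h|->] //; lia.
case: eqP => [hA|_]; last by rewrite mulr0.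
rewrite mulr1 -hA -prodrN; apply: eq_big => [j|//]; by rewrite !inE ffunE.
Qed.

Lemma deriv_prod_eval (I : Type) (t : seq I) (w : I -> C) (r : C) :
  (forall j, r != w j) ->
  (\prod_(j <- t) ('X - (w j)%:P))^`().[r] =
  (\prod_(j <- t) (r - w j)) * \sum_(j <- t) (r - w j)^-1.
Proof.
move=> hr; elim: t => [|x t IH]; first by rewrite !big_nil derivC horner0 mulr0.
rewrite !big_cons derivM derivXsubC mul1r hornerD hornerM IH !hornerE.
rewrite horner_prod.
have hx : r - w x != 0 by rewrite subr_eq0.
rewrite mulrDr /=; congr (_ + _).
rewrite mulrAC divff // mul1r; apply: eq_bigr => j _; by rewrite !hornerE.
Qed.

Lemma gauss_lucas (I : Type) (t : seq I) (w : I -> C) (r : C) :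
  (0 < size t)%N -> (forall j, `|w j| <= 1) ->
  (\prod_(j <- t) ('X - (w j)%:P))^`().[r] = 0 -> `|r| <= 1.
Proof.
move=> tne hw hroot; case: (boolP (`|r| <= 1)) => // hn; exfalso.
have hr1 : 1 < `|r| by rewrite real_ltNge ?realE ?normr_ge0 ?ler01 ?orbT.
have hr : forall j, r != w j.
  move=> j; apply/eqP => e; move: (hw j); rewrite -e => h.
  by move: (lt_le_trans hr1 h); rewrite ltxx.
have hne : forall j, r - w j != 0 by move=> j; rewrite subr_eq0.
move: hroot; rewrite deriv_prod_eval // => /eqP; rewrite mulf_eq0.
have hP : \prod_(j <- t) (r - w j) != 0.
  by rewrite prodf_seq_neq0; elim: (t) => //= x s ->; rewrite hne.
rewrite (negbTE hP) /=.
move=> /eqP hs.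
pose c j := `|r - w j| ^- 2.
have cpos : forall j, 0 < c j.
  by move=> j; rewrite /c invr_gt0 exprn_gt0 // normr_gt0.
have hs2 : \sum_(j <- t) c j * (r * (r - w j)^*) = 0.
  rewrite -[RHS](mulr0 r) -[in RHS]hs mulr_sumr; apply: eq_bigr => j _.
  by rewrite (invC_norm (r - w j)) /c mulrCA.
have hs3 : \sum_(j <- t) c j * `|r| ^+ 2 = \sum_(j <- t) c j * (r * (w j)^*).
  apply/eqP; rewrite -subr_eq0 -sumrB; apply/eqP; rewrite -[RHS]hs2.
  by apply: eq_bigr => j _; rewrite -mulrBr normCK rmorphB /= !mulrBr.
have Spos : 0 < \sum_(j <- t) c j.
  move: tne; case: (t) => // x t0 _; rewrite big_cons.
  apply: lt_le_trans (cpos x) _; rewrite lerDl sumr_ge0 // => k _.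
  exact: ltW.
have hr0 : 0 < `|r| by apply: lt_trans hr1.
have key : (\sum_(j <- t) c j) * `|r| ^+ 2 <= (\sum_(j <- t) c j) * `|r|.
  rewrite -[X in X <= _]ger0_norm; last by rewrite mulr_ge0 ?exprn_ge0 // ltW.
  rewrite mulr_suml hs3 mulr_suml.
  apply: le_trans (ler_norm_sum _ _ _) _.
  apply: ler_sum => j _.
  rewrite !normrM norm_conjC (gtr0_norm (cpos j)).
  apply: ler_wpM2l; first exact: ltW.
  by rewrite ler_piMr // ltW.
move: key; rewrite ler_pM2l // expr2 -{3}[`|r|]mul1r ler_pM2r // => h.
by move: (lt_le_trans hr1 h); rewrite ltxx.
Qed.
End S.

Theorem lemma2p6 (R : realType) (m p n : nat) :
  (0 < m)%N -> (0 < p)%N -> (0 < n)%N -> (p %| m)%N -> (1 < n)%N ->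
  forall y : 'I_n -> R[i], Thetabar m p y -> Gamma (piproj y).
Proof.
move=> m0 p0 n0 pm n1 y [z [hz hy]].
pose w := fun j : 'I_n => z j ^+ m.
have hw : forall j, `|w j| <= 1.
  by move=> j; rewrite /w normrX exprn_ile1.
pose P := \prod_(j < n) ('X - (w j)%:P).
pose Q := P^`().
have [s hs] := closed_field_poly_normal Q.
have hie : size (index_enum 'I_n) = n by rewrite [index_enum _]unlock -enumT size_enum_ord.
have sP : size P = n.+1 by rewrite /P size_prod_XsubC hie.
have Pn : P`_n = 1.
  have := @coef_prodXsubC R n w 0 (leq0n n); rewrite subn0 expr0 mul1r => ->.
  rewrite /Defs.esym (big_pred1 set0); first by rewrite big_set0.
  by move=> A; rewrite /= cards_eq0.
have Qn : Q`_n.-1 = n%:R by rewrite /Q coef_deriv prednK // Pn.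
have hn0 : n%:R != 0 :> R[i] by rewrite pnatr_eq0 -lt0n.
have sQ : size Q = n.
  apply/eqP; rewrite eqn_leq; apply/andP; split.
    have := @lt_size_deriv _ P; rewrite sP -/Q; apply.
    by rewrite -size_poly_eq0 sP.
  rewrite -(prednK n0) ltnNge; apply/negP => h.
  by move: hn0; rewrite -Qn nth_default // eqxx.
have lQ : lead_coef Q = n%:R by rewrite lead_coefE sQ Qn.
have hsz : size s = n.-1.
  have := sQ; rewrite hs size_scale ?lQ // size_prod_XsubC => <-; by [].
have hroots : forall r, r \in s -> `|r| <= 1.
  move=> r rs; apply: (@gauss_lucas R _ (index_enum 'I_n) w r); first by rewrite hie.
    exact: hw.
  rewrite -/P -/Q hs hornerZ.
  by have := root_prod_XsubC s r; rewrite rs => /rootP ->; rewrite mulr0.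
pose x := fun k : 'I_n.-1 => s`_k.
exists x; split.
  by move=> k; apply: hroots; rewrite mem_nth // hsz.
have hM : \prod_(k < n.-1) ('X - (x k)%:P) = \prod_(r <- s) ('X - r%:P).
  by rewrite (big_nth 0) hsz big_mkord.
move=> i.
have hd : (i.+1 <= n.-1)%N by exact: ltn_ord.
have hd' : (i.+1 <= n)%N by apply: leq_trans hd (leq_pred n).
have h1 := @coef_prodXsubC R n.-1 x i.+1 hd.
have h2 := @coef_prodXsubC R n w i.+1 hd'.
rewrite -/P in h2; rewrite hM in h1.
have e1 : (n.-1 - i.+1).+1 = (n - i.+1)%N by lia.
have h3 : Q`_(n.-1 - i.+1) = P`_(n - i.+1) *+ (n - i.+1).
  by rewrite /Q coef_deriv e1.
have h4 : Q`_(n.-1 - i.+1) = n%:R * ((-1) ^+ i.+1 * Defs.esym x i.+1).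
  by rewrite {1}hs coefZ lQ h1.
move: h3; rewrite h4 h2 -[in RHS]mulr_natl => e.
rewrite /piproj hy /theta /=.
have -> : (i.+1 < n)%N by lia.
apply: (mulfI hn0); rewrite -[Defs.esym x _](signrMK i.+1).
rewrite [RHS]mulrCA e [RHS]mulrCA (@signrMK _ i.+1 (Defs.esym w i.+1)) [LHS]mulrA [X in X * _]mulrCA mulfV // mulr1.
by [].
Qed.
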